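(* Let $r_{\mathrm c}>0$, let $w_{\mathrm c}(\lambda)=\sqrt{\lambda(\lambda-4r_{\mathrm c})}$ be the branch analytic in $|\lambda|>4r_{\mathrm c}$ with $w_{\mathrm c}(\lambda)\sim\lambda$ as $\lambda\to\infty$, and let $I\subset\mathbb{R}$ be an open interval. Let $$\mathfrak a(\bar\epsilon,x)=r_{\mathrm c}+\sum_{k\ge 1}\mathfrak a_k(x)\bar\epsilon^{k},\qquad \mathbb V(\lambda,\bar\epsilon;x)=\sum_{k\ge 0}\mathbb V^{[k]}(\lambda,x)\bar\epsilon^{k}$$ be formal power series in $\bar\epsilon$ with $\mathfrak a_k\in C^\infty(I)$, each $\mathbb V^{[k]}$ analytic in $\lambda$ for $|\lambda|>4r_{\mathrm c}$ and $C^\infty$ in $x$, and $\mathbb V^{[0]}=\lambda/w_{\mathrm c}$. Assume that, as formal power series in $\bar\epsilon$, $$\mathfrak a(\bar\epsilon,x)\big(\mathbb V(\lambda,\bar\epsilon;x)+\mathbb V(\lambda,-\bar\epsilon;x-\bar\epsilon)\big)\big(\mathbb V(\lambda,\bar\epsilon;x)+\mathbb V(\lambda,-\bar\epsilon;x+\bar\epsilon)\big)=\lambda\big(\mathbb V(\lambda,\bar\epsilon;x)^2-1\big).$$ Then the two formal series $$E_\mp(\bar\epsilon)=\lambda\,\mathbb V(\lambda,\bar\epsilon;x\mp\tfrac{\bar\epsilon}{2})-\mathfrak a(\bar\epsilon,x\mp\tfrac{\bar\epsilon}{2})\Big[\mathbb V(\lambda,\bar\epsilon;x\mp\tfrac{\bar\epsilon}{2})+\mathbb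 V(\lambda,-\bar\epsilon;x\mp\tfrac{3\bar\epsilon}{2})\Big]$$ (one with all upper signs, one with all lower signs) are even functions of $\bar\epsilon$, i.e. all coefficients of odd powers of $\bar\epsilon$ vanish.
   Context: Shifted and sign-reversed series are understood formally: for $F(\bar\epsilon;x)=\sum_kF_k(x)\bar\epsilon^k$ and constants $c$, $F(\pm\bar\epsilon;x+c\bar\epsilon)=\sum_{k,n}(\pm1)^kF_k^{(n)}(x)c^n\bar\epsilon^{k+n}/n!$; equalities of formal series mean equality of coefficients of each power of $\bar\epsilon$ (coefficients being functions of $\lambda$ and $x$). *)

(* Defs.v *)
From Stdlib Require Import Reals Factorial.
From Coquelicot Require Export Coquelicot.
Open Scope C_scope.

Definition in_open_int (lo hi : Rbar) (x : R) : Prop := Rbar_lt lo x /\ Rbar_lt x hi.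

Definition ext_dom (rc : R) (l : C) : Prop := (4 * rc < Cmod l)%R.

Definition holo_at (f : C -> C) (z : C) : Prop :=
  @ex_derive C_AbsRing C_NormedModule f z.

Definition lim_at_inf (f : C -> C) (L : C) : Prop :=
  forall eps : R, (0 < eps)%R ->
    exists M : R, forall l : C, (M < Cmod l)%R -> (Cmod (f l - L) < eps)%R.

Definition is_wc (rc : R) (w : C -> C) : Prop :=
  (forall l, ext_dom rc l -> w l * w l = l * (l - RtoC (4 * rc))) /\
  (forall l, ext_dom rc l -> holo_at w l) /\
  lim_at_inf (fun l => w l / l) 1.

Definition smooth_on (lo hi : Rbar) (f : R -> R) : Prop :=
  forall (n : nat) (x : R), in_open_int lo hi x -> ex_derive_n f n x.

Definition Csmooth_on (lo hi : Rbar) (f : R -> C) : Prop :=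
  smooth_on lo hi (fun t => Re (f t)) /\ smooth_on lo hi (fun t => Im (f t)).

Definition CDerive_n (f : R -> C) (n : nat) (x : R) : C :=
  (Derive_n (fun t => Re (f t)) n x, Derive_n (fun t => Im (f t)) n x).

(* Formal power series in eps whose coefficients are functions of x:
   F : nat -> R -> C, F k x = coefficient of eps^k. *)
Definition fser := nat -> R -> C.

(* F(s * eps; x + c * eps) = sum_{k,n} s^k F_k^{(n)}(x) c^n eps^{k+n} / n!. *)
Definition fshift (F : fser) (s c : R) : fser :=
  fun m x => sum_n (fun k =>
     RtoC (s ^ k) * CDerive_n (F k) (m - k) x
       * RtoC (c ^ (m - k) / INR (fact (m - k)))) m.

Definition fmul (F G : fser) : fser :=
  fun m x => sum_n (fun k => F k x * G (m - k)%nat x) m.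

Definition fadd (F G : fser) : fser := fun m x => F m x + G m x.
Definition fsub (F G : fser) : fser := fun m x => F m x - G m x.
Definition fscal (c : C) (F : fser) : fser := fun m x => c * F m x.
Definition fone : fser := fun m _ => match m with O => 1 | _ => 0 end.

(* Main.v *)
Require Import Defs.
From Stdlib Require Import Reals.
From Coquelicot Require Import Coquelicot.
Open Scope C_scope.
From Stdlib Require Import Lia Lra Factorial Arith Wf_nat.
Set Bullet Behavior "Strict Subproofs".

Module PA.

Section G.
Context {G : AbelianMonoid}.

Lemma gsum_shift (a : nat -> G) n :
  sum_n a (S n) = plus (a 0%nat) (sum_n (fun k => a (S k)) n).
Proof.
  induction n.
  - rewrite sum_Sn, !sum_O. reflexivity.
  - rewrite sum_Sn, IHn, sum_Sn. now rewrite plus_assoc.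
Qed.

Lemma gsum_zero (a : nat -> G) n : (forall k, (k <= n)%nat -> a k = zero) -> sum_n a n = zero.
Proof.
  intros H. induction n.
  - rewrite sum_O. apply H. lia.
  - rewrite sum_Sn, IHn. rewrite H; [|lia]. apply plus_zero_l. intros; apply H; lia.
Qed.

Lemma gsum_rev (a : nat -> G) n : sum_n a n = sum_n (fun k => a (n - k)%nat) n.
Proof.
  revert a; induction n; intros a.
  - rewrite ?sum_O. reflexivity.
  - rewrite gsum_shift. rewrite (IHn (fun k => a (S k))).
    rewrite sum_Sn. rewrite Nat.sub_diag. rewrite plus_comm. f_equal.
    apply sum_n_ext_loc. intros k Hk. f_equal. lia.
Qed.

Lemma gsum_tri (g : nat -> nat -> G) m :
  sum_n (fun k => sum_n (fun i => g i k) k) m =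
  sum_n (fun i => sum_n (fun k => g i (i + k)%nat) (m - i)) m.
Proof.
  induction m.
  - rewrite ?sum_O. reflexivity.
  - rewrite sum_Sn, IHm. rewrite (sum_Sn (fun i => sum_n _ (S m - i))).
    rewrite Nat.sub_diag, sum_O, Nat.add_0_r.
    rewrite (sum_n_ext_loc (fun i => sum_n (fun k => g i (i + k)%nat) (S m - i))
               (fun i => plus (sum_n (fun k => g i (i + k)%nat) (m - i)) (g i (S m)))).
    + rewrite sum_n_plus. rewrite sum_Sn. now rewrite ?plus_assoc.
    + intros i Hi. replace (S m - i)%nat with (S (m - i)) by lia.
      rewrite sum_Sn. f_equal. f_equal. lia.
Qed.

End G.

End PA.
Import PA.

Module PB.
Local Open Scope R_scope.
Ltac rr := match goal with |- @eq _ ?a ?b => change (@eq R a b) end; ring.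

Lemma rsum_plus (a b : nat -> R) n : sum_n (fun k => a k + b k) n = sum_n a n + sum_n b n.
Proof. apply (sum_n_plus a b n). Qed.
Lemma rsum_mult_l (c : R) (a : nat -> R) n : sum_n (fun k => c * a k) n = c * sum_n a n.
Proof. apply (sum_n_mult_l c a n). Qed.
Lemma rsum_Sn (a : nat -> R) n : sum_n a (S n) = sum_n a n + a (S n).
Proof. exact (sum_Sn a n). Qed.
Lemma rsum_shift (a : nat -> R) n : sum_n a (S n) = a 0%nat + sum_n (fun k => a (S k)) n.
Proof. exact (gsum_shift a n). Qed.

Section Sm.
Variables lo hi : Rbar.
Let inU := in_open_int lo hi.
Let sm := smooth_on lo hi.

Lemma U_open x : inU x -> locally x inU.
Proof.
  intros [H1 H2].
  assert (Ho : @open R_UniformSpace (fun u : R => Rbar_lt lo u /\ Rbar_lt u hi)).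
  { apply open_and. apply open_Rbar_gt. apply open_Rbar_lt. }
  apply Ho. split; assumption.
Qed.

Lemma sm_loc f x : sm f -> inU x -> locally x (fun y => forall k, ex_derive_n f k y).
Proof.
  intros Hf Hx. apply (filter_imp inU). intros y Hy k. apply Hf. exact Hy. apply U_open; auto.
Qed.

Lemma sm_loc' f x n : sm f -> inU x -> locally x (fun y => forall k, (k <= n)%nat -> ex_derive_n f k y).
Proof.
  intros Hf Hx. apply (filter_imp (fun y => forall k, ex_derive_n f k y)).
  intros; auto. apply sm_loc; auto.
Qed.

Lemma loc_eq (f g : R -> R) x : (forall t, inU t -> f t = g t) -> inU x -> locally x (fun t => f t = g t).
Proof. intros H Hx. apply (filter_imp inU). exact H. apply U_open; auto. Qed.

Lemma sm_ext f g : (forall t, inU t -> f t = g t) -> sm f -> sm g.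
Proof.
  intros H Hf n x Hx. apply (ex_derive_n_ext_loc f g). apply loc_eq; auto. apply Hf; auto.
Qed.

Lemma Dn_ext_U f g n x : (forall t, inU t -> f t = g t) -> inU x -> Derive_n f n x = Derive_n g n x.
Proof. intros H Hx. apply Derive_n_ext_loc. apply loc_eq; auto. Qed.

Lemma sm_plus f g : sm f -> sm g -> sm (fun t => f t + g t).
Proof. intros Hf Hg n x Hx. apply ex_derive_n_plus; apply sm_loc'; auto. Qed.
Lemma sm_minus f g : sm f -> sm g -> sm (fun t => f t - g t).
Proof. intros Hf Hg n x Hx. apply ex_derive_n_minus; apply sm_loc'; auto. Qed.
Lemma sm_scal c f : sm f -> sm (fun t => c * f t).
Proof. intros Hf n x Hx. apply ex_derive_n_scal_l; auto. Qed.
Lemma sm_const c : sm (fun _ => c).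
Proof. intros n x Hx. apply ex_derive_n_const. Qed.
Lemma sm_sum f N : (forall i, sm (f i)) -> sm (fun t => sum_n (fun i => f i t) N).
Proof.
  intros Hf n x Hx. apply ex_derive_n_sum_n.
  apply (filter_imp inU). intros y Hy l j _ _. apply Hf; auto. apply U_open; auto.
Qed.

Lemma Dn_comp1 f n t : Derive_n (Derive f) n t = Derive_n f (S n) t.
Proof.
  rewrite <- Nat.add_1_r. rewrite <- Derive_n_comp. reflexivity.
Qed.

Lemma sm_Dn f j : sm f -> sm (Derive_n f j).
Proof.
  intros Hf n x Hx. destruct n. simpl; auto.
  simpl. apply (ex_derive_ext (Derive_n f (n + j))).
  intros t. rewrite Derive_n_comp. reflexivity.
  apply (Hf (S (n + j))). auto.
Qed.

Lemma sm_D f : sm f -> sm (Derive f).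
Proof. intros Hf. apply (sm_Dn f 1). auto. Qed.

Lemma exS h n x : ex_derive h x -> ex_derive_n (Derive h) n x -> ex_derive_n h (S n) x.
Proof.
  intros H1 H2. destruct n. simpl. exact H1.
  simpl in *. apply (ex_derive_ext (Derive_n (Derive h) n)).
  intros t. apply Dn_comp1. exact H2.
Qed.

Lemma smD_ex f x : sm f -> inU x -> ex_derive f x.
Proof. intros Hf Hx. apply (Hf 1%nat x Hx). Qed.

Lemma sm_mult_aux n : forall f g, sm f -> sm g -> forall x, inU x -> forall k, (k <= n)%nat ->
  ex_derive_n (fun t => f t * g t) k x.
Proof.
  induction n; intros f g Hf Hg x Hx k Hk.
  - destruct k; [simpl; auto | lia].
  - destruct k. simpl; auto.
    apply exS. apply ex_derive_mult; apply smD_ex; auto.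
    apply (ex_derive_n_ext_loc (fun t => Derive f t * g t + f t * Derive g t)).
    + apply (filter_imp inU). intros t Ht. rewrite Derive_mult; auto; apply smD_ex; auto.
      apply U_open; auto.
    + apply ex_derive_n_plus.
      * apply (filter_imp inU). intros y Hy k' Hk'. apply IHn; auto. apply sm_D; auto. lia.
        apply U_open; auto.
      * apply (filter_imp inU). intros y Hy k' Hk'. apply IHn; auto. apply sm_D; auto. lia.
        apply U_open; auto.
Qed.

Lemma sm_mult f g : sm f -> sm g -> sm (fun t => f t * g t).
Proof. intros Hf Hg n x Hx. apply (sm_mult_aux n); auto. Qed.

Lemma Dn_plus_U f g n x : sm f -> sm g -> inU x ->
  Derive_n (fun t => f t + g t) n x = Derive_n f n x + Derive_n g n x.
Proof. intros; apply Derive_n_plus; apply sm_loc'; auto. Qed.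
Lemma Dn_minus_U f g n x : sm f -> sm g -> inU x ->
  Derive_n (fun t => f t - g t) n x = Derive_n f n x - Derive_n g n x.
Proof. intros; apply Derive_n_minus; apply sm_loc'; auto. Qed.

Definition Tn (f : R -> R) n x := Derive_n f n x / INR (fact n).

Lemma Tn_D f k x : Tn (Derive f) k x = INR (S k) * Tn f (S k) x.
Proof.
  unfold Tn. rewrite Dn_comp1. rewrite fact_simpl. rewrite mult_INR.
  field. split; [apply not_0_INR; apply fact_neq_0 | apply not_0_INR; lia].
Qed.

Lemma leibniz n : forall f g x, sm f -> sm g -> inU x ->
  Tn (fun t => f t * g t) n x = sum_n (fun k => Tn f k x * Tn g (n - k) x) n.
Proof.
  induction n; intros f g x Hf Hg Hx.
  - rewrite sum_O. unfold Tn. simpl. field.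
  - unfold Tn at 1. rewrite <- Dn_comp1.
    rewrite (Dn_ext_U _ (fun t => Derive f t * g t + f t * Derive g t)); auto.
    2:{ intros t Ht. apply Derive_mult; apply smD_ex; auto. }
    rewrite Dn_plus_U; auto; try (apply sm_mult; auto; apply sm_D; auto).
    rewrite fact_simpl, mult_INR.
    replace ((Derive_n (fun t => Derive f t * g t) n x + Derive_n (fun t => f t * Derive g t) n x) /
       (INR (S n) * INR (fact n))) with
      ((Tn (fun t => Derive f t * g t) n x + Tn (fun t => f t * Derive g t) n x) / INR (S n)).
    2:{ unfold Tn. field. split; [apply not_0_INR; apply fact_neq_0 | apply not_0_INR; lia]. }
    rewrite IHn, IHn; auto; try (apply sm_D; auto).
    set (a := fun k => Tn f k x * Tn g (S n - k) x).
    assert (E1 : sum_n (fun k => Tn (Derive f) k x * Tn g (n - k) x) n =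
                 sum_n (fun k => INR k * a k) (S n)).
    { rewrite rsum_shift. simpl INR at 1. rewrite Rmult_0_l, Rplus_0_l.
      apply sum_n_ext. intros k. rewrite Tn_D. unfold a. simpl (S n - S k)%nat. cbv beta. rr. }
    assert (E2 : sum_n (fun k => Tn f k x * Tn (Derive g) (n - k) x) n =
                 sum_n (fun k => INR (S n - k) * a k) (S n)).
    { rewrite rsum_Sn. rewrite Nat.sub_diag. simpl INR at 2. rewrite Rmult_0_l, Rplus_0_r.
      apply sum_n_ext_loc. intros k Hk. rewrite Tn_D. unfold a.
      replace (S (n - k)) with (S n - k)%nat by lia. rr. }
    rewrite E1, E2, <- rsum_plus.
    rewrite (sum_n_ext_loc _ (fun k => INR (S n) * a k)).
    + rewrite rsum_mult_l. field. apply not_0_INR; lia.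
    + intros k Hk. rewrite minus_INR by lia. rr.
Qed.

End Sm.

End PB.
Import PB.

Module PC.
Local Open Scope C_scope.

Lemma Re_sum (a : nat -> C) n : Re (sum_n a n) = sum_n (fun k => Re (a k)) n.
Proof.
  induction n. rewrite !sum_O. reflexivity.
  rewrite (sum_Sn a n). rewrite (rsum_Sn (fun k => Re (a k)) n). rewrite <- IHn. reflexivity.
Qed.
Lemma Im_sum (a : nat -> C) n : Im (sum_n a n) = sum_n (fun k => Im (a k)) n.
Proof.
  induction n. rewrite !sum_O. reflexivity.
  rewrite (sum_Sn a n). rewrite (rsum_Sn (fun k => Im (a k)) n). rewrite <- IHn. reflexivity.
Qed.

Lemma rsum_opp (a : nat -> R) n : sum_n (fun k => - a k)%R n = (- sum_n a n)%R.
Proof.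
  rewrite <- (Rmult_1_l (sum_n a n)), Ropp_mult_distr_l, <- rsum_mult_l.
  apply sum_n_ext; intros; rr.
Qed.

Lemma C_ext (a b : C) : Re a = Re b -> Im a = Im b -> a = b.
Proof. intros; apply injective_projections; auto. Qed.

Section Csm.
Variables lo hi : Rbar.
Let inU := in_open_int lo hi.
Let sm := smooth_on lo hi.
Let csm := Csmooth_on lo hi.

Definition ctay (f : R -> C) n x : C := (Tn (fun t => Re (f t)) n x, Tn (fun t => Im (f t)) n x).

Lemma ctay_eq f n x : CDerive_n f n x * RtoC (/ INR (fact n)) = ctay f n x.
Proof. apply C_ext; unfold CDerive_n, ctay, Tn; simpl; field; apply not_0_INR, fact_neq_0. Qed.

Lemma Re_CDn f n x : Re (CDerive_n f n x) = Derive_n (fun t => Re (f t)) n x.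
Proof. reflexivity. Qed.
Lemma Im_CDn f n x : Im (CDerive_n f n x) = Derive_n (fun t => Im (f t)) n x.
Proof. reflexivity. Qed.
Lemma Re_plus (a b : C) : Re (a + b) = (Re a + Re b)%R. Proof. reflexivity. Qed.
Lemma Im_plus (a b : C) : Im (a + b) = (Im a + Im b)%R. Proof. reflexivity. Qed.
Lemma Re_minus (a b : C) : Re (a - b) = (Re a - Re b)%R. Proof. unfold Cminus, Rminus. reflexivity. Qed.
Lemma Im_minus (a b : C) : Im (a - b) = (Im a - Im b)%R. Proof. unfold Cminus, Rminus. reflexivity. Qed.
Lemma Re_mult (a b : C) : Re (a * b) = (Re a * Re b - Im a * Im b)%R. Proof. reflexivity. Qed.
Lemma Im_mult (a b : C) : Im (a * b) = (Re a * Im b + Im a * Re b)%R. Proof. reflexivity. Qed.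

Lemma CDn_0 f x : CDerive_n f 0 x = f x.
Proof. apply C_ext; reflexivity. Qed.

Lemma CDn_ext_U f g n x : (forall t, inU t -> f t = g t) -> inU x -> CDerive_n f n x = CDerive_n g n x.
Proof.
  intros H Hx. unfold CDerive_n. f_equal; apply (Dn_ext_U lo hi); auto; intros t Ht; rewrite H; auto.
Qed.

Lemma csm_ext f g : (forall t, inU t -> f t = g t) -> csm f -> csm g.
Proof.
  intros H [H1 H2]. split.
  - apply (sm_ext lo hi (fun t => Re (f t))); auto. intros t Ht; rewrite H; auto.
  - apply (sm_ext lo hi (fun t => Im (f t))); auto. intros t Ht; rewrite H; auto.
Qed.

Lemma csm_plus f g : csm f -> csm g -> csm (fun t => f t + g t).
Proof. intros [F1 F2] [G1 G2]. split; apply (sm_plus lo hi); auto. Qed.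

Lemma csm_minus f g : csm f -> csm g -> csm (fun t => f t - g t).
Proof.
  intros [F1 F2] [G1 G2]. split.
  - apply (sm_ext lo hi (fun t => Re (f t) - Re (g t))%R). intros; unfold Cminus, Cplus, Copp, Re, Im; simpl; ring. apply (sm_minus lo hi); auto.
  - apply (sm_ext lo hi (fun t => Im (f t) - Im (g t))%R). intros; unfold Cminus, Cplus, Copp, Re, Im; simpl; ring. apply (sm_minus lo hi); auto.
Qed.

Lemma csm_mult f g : csm f -> csm g -> csm (fun t => f t * g t).
Proof.
  intros [F1 F2] [G1 G2]. split.
  - apply (sm_minus lo hi); apply (sm_mult lo hi); auto.
  - apply (sm_plus lo hi); apply (sm_mult lo hi); auto.
Qed.

Lemma csm_const (z : C) : csm (fun _ => z).
Proof. split; apply (sm_const lo hi). Qed.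

Lemma csm_scal (z : C) f : csm f -> csm (fun t => z * f t).
Proof. intros Hf. apply csm_mult; auto. apply csm_const. Qed.

Lemma csm_sum (F : nat -> R -> C) N : (forall i, csm (F i)) -> csm (fun t => sum_n (fun i => F i t) N).
Proof.
  intros H. split.
  - apply (sm_ext lo hi (fun t => sum_n (fun i => Re (F i t)) N)). intros; rewrite Re_sum; auto.
    apply (sm_sum lo hi). intros i; exact (proj1 (H i)).
  - apply (sm_ext lo hi (fun t => sum_n (fun i => Im (F i t)) N)). intros; rewrite Im_sum; auto.
    apply (sm_sum lo hi). intros i; exact (proj2 (H i)).
Qed.

Lemma csm_CDn f j : csm f -> csm (fun t => CDerive_n f j t).
Proof. intros [F1 F2]. split; apply (sm_Dn lo hi); auto. Qed.

Lemma CDn_comp f n j x : CDerive_n (fun t => CDerive_n f j t) n x = CDerive_n f (n + j) x.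
Proof. apply C_ext; rewrite ?Re_CDn, ?Im_CDn; rewrite <- Derive_n_comp; reflexivity. Qed.

Lemma CDn_plus f g n x : csm f -> csm g -> inU x ->
  CDerive_n (fun t => f t + g t) n x = CDerive_n f n x + CDerive_n g n x.
Proof.
  intros [F1 F2] [G1 G2] Hx. apply C_ext; rewrite ?Re_plus, ?Im_plus, ?Re_CDn, ?Im_CDn.
  - rewrite <- (Dn_plus_U lo hi (fun t => Re (f t)) (fun t => Re (g t))); auto.
  - rewrite <- (Dn_plus_U lo hi (fun t => Im (f t)) (fun t => Im (g t))); auto.
Qed.

Lemma CDn_minus f g n x : csm f -> csm g -> inU x ->
  CDerive_n (fun t => f t - g t) n x = CDerive_n f n x - CDerive_n g n x.
Proof.
  intros [F1 F2] [G1 G2] Hx. apply C_ext; rewrite ?Re_minus, ?Im_minus, ?Re_CDn, ?Im_CDn.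
  - rewrite <- (Dn_minus_U lo hi (fun t => Re (f t)) (fun t => Re (g t))); auto; apply Derive_n_ext; intros; apply Re_minus.
  - rewrite <- (Dn_minus_U lo hi (fun t => Im (f t)) (fun t => Im (g t))); auto; apply Derive_n_ext; intros; apply Im_minus.
Qed.

Lemma CDn_scal (z : C) f n x : csm f -> inU x ->
  CDerive_n (fun t => z * f t) n x = z * CDerive_n f n x.
Proof.
  intros [F1 F2] Hx. destruct z as [zr zi]. apply C_ext; rewrite ?Re_mult, ?Im_mult, ?Re_CDn, ?Im_CDn; change (Re (zr, zi)) with zr; change (Im (zr, zi)) with zi.
  - rewrite (Derive_n_ext _ (fun t => zr * Re (f t) - zi * Im (f t))%R) by (intros; reflexivity).
    rewrite (Dn_minus_U lo hi); try apply (sm_scal lo hi); auto.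
    rewrite !Derive_n_scal_l. reflexivity.
  - rewrite (Derive_n_ext _ (fun t => zr * Im (f t) + zi * Re (f t))%R) by (intros; reflexivity).
    rewrite (Dn_plus_U lo hi); try apply (sm_scal lo hi); auto.
    rewrite !Derive_n_scal_l. reflexivity.
Qed.

Lemma CDn_const (z : C) n x : CDerive_n (fun _ => z) n x = match n with O => z | _ => 0 end.
Proof.
  destruct n. apply CDn_0. apply C_ext; rewrite ?Re_CDn, ?Im_CDn; apply Derive_n_const.
Qed.

Lemma CDn_sum (F : nat -> R -> C) N n x : (forall i, csm (F i)) -> inU x ->
  CDerive_n (fun t => sum_n (fun i => F i t) N) n x = sum_n (fun i => CDerive_n (F i) n x) N.
Proof.
  intros H Hx. induction N.
  - rewrite sum_O. apply CDn_ext_U; auto. intros; rewrite sum_O; auto.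
  - rewrite (sum_Sn (fun i => CDerive_n (F i) n x) N).
    rewrite (CDn_ext_U _ (fun t => sum_n (fun i => F i t) N + F (S N) t)); auto.
    + rewrite CDn_plus; auto. rewrite IHN. reflexivity. apply csm_sum; auto.
    + intros t _. apply (sum_Sn (fun i => F i t) N).
Qed.

Lemma ctay_mult f g n x : csm f -> csm g -> inU x ->
  ctay (fun t => f t * g t) n x = sum_n (fun k => ctay f k x * ctay g (n - k) x) n.
Proof.
  intros [F1 F2] [G1 G2] Hx. apply C_ext.
  - rewrite Re_sum. unfold ctay. simpl.
    unfold Tn at 1. rewrite (Derive_n_ext _ (fun t => Re (f t) * Re (g t) - Im (f t) * Im (g t))%R)
      by (intros; reflexivity).
    rewrite (Dn_minus_U lo hi); try apply (sm_mult lo hi); auto.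
    unfold Rminus. rewrite Rdiv_plus_distr.
    change (Tn (fun t => Re (f t) * Re (g t))%R n x + - Derive_n (fun t => Im (f t) * Im (g t))%R n x / INR (fact n) =
       sum_n (fun k => Tn (fun t => Re (f t)) k x * Tn (fun t => Re (g t)) (n - k) x +
         - (Tn (fun t => Im (f t)) k x * Tn (fun t => Im (g t)) (n - k) x)) n)%R.
    rewrite rsum_plus. rewrite (leibniz lo hi); auto. f_equal.
    rewrite Ropp_div. change (- Tn (fun t => Im (f t) * Im (g t))%R n x = 
      sum_n (fun k => - (Tn (fun t => Im (f t)) k x * Tn (fun t => Im (g t)) (n - k) x)) n)%R.
    rewrite (leibniz lo hi); auto.
    symmetry. apply rsum_opp.
  - rewrite Im_sum. unfold ctay. simpl.
    unfold Tn at 1. rewrite (Derive_n_ext _ (fun t => Re (f t) * Im (g t) + Im (f t) * Re (g t))%R)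
      by (intros; reflexivity).
    rewrite (Dn_plus_U lo hi); try apply (sm_mult lo hi); auto.
    rewrite Rdiv_plus_distr.
    change (Tn (fun t => Re (f t) * Im (g t))%R n x + Tn (fun t => Im (f t) * Re (g t))%R n x =
       sum_n (fun k => Tn (fun t => Re (f t)) k x * Tn (fun t => Im (g t)) (n - k) x +
         (Tn (fun t => Im (f t)) k x * Tn (fun t => Re (g t)) (n - k) x)) n)%R.
    rewrite rsum_plus. rewrite !(leibniz lo hi); auto.
Qed.

End Csm.

End PC.
Import PC.

Module PD.
Local Open Scope C_scope.

Lemma csum_Sn (a : nat -> C) n : sum_n a (S n) = sum_n a n + a (S n).
Proof. exact (sum_Sn a n). Qed.
Lemma csum_plus (a b : nat -> C) n : sum_n (fun k => a k + b k) n = sum_n a n + sum_n b n.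
Proof. exact (sum_n_plus a b n). Qed.
Lemma csum_mult_l (z : C) (a : nat -> C) n : sum_n (fun k => z * a k) n = z * sum_n a n.
Proof. exact (sum_n_mult_l z a n). Qed.
Lemma csum_mult_r (z : C) (a : nat -> C) n : sum_n (fun k => a k * z) n = sum_n a n * z.
Proof. exact (sum_n_mult_r z a n). Qed.
Lemma csum_ext (a b : nat -> C) n : (forall k, (k <= n)%nat -> a k = b k) -> sum_n a n = sum_n b n.
Proof. apply sum_n_ext_loc. Qed.
Lemma csum_opp (a : nat -> C) n : sum_n (fun k => - a k) n = - sum_n a n.
Proof.
  replace (- sum_n a n) with ((-1) * sum_n a n) by ring. rewrite <- csum_mult_l.
  apply csum_ext; intros; ring.
Qed.
Lemma csum_minus (a b : nat -> C) n : sum_n (fun k => a k - b k) n = sum_n a n - sum_n b n.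
Proof.
  unfold Cminus. rewrite <- csum_opp, <- csum_plus. reflexivity.
Qed.
Lemma csum_zero (a : nat -> C) n : (forall k, (k <= n)%nat -> a k = RtoC 0) -> sum_n a n = RtoC 0.
Proof. apply (gsum_zero a n). Qed.

Lemma tri_swap (h : nat -> nat -> C) M :
  sum_n (fun j => sum_n (fun p => h j p) (M - j)) M =
  sum_n (fun p => sum_n (fun j => h j p) (M - p)) M.
Proof.
  transitivity (sum_n (fun k => sum_n (fun j => h j (k - j)%nat) k) M).
  - rewrite (gsum_tri (fun j k => h j (k - j)%nat)). apply csum_ext; intros j Hj.
    apply csum_ext; intros p Hp. f_equal. lia.
  - transitivity (sum_n (fun k => sum_n (fun p => h (k - p)%nat p) k) M).
    + apply csum_ext; intros k Hk. rewrite (gsum_rev (fun j => h j (k - j)%nat)).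
      apply csum_ext; intros p Hp. f_equal. lia.
    + rewrite (gsum_tri (fun p k => h (k - p)%nat p)). apply csum_ext; intros p Hp.
      apply csum_ext; intros j Hj. f_equal. lia.
Qed.

Definition cmul (a b : nat -> C) m := sum_n (fun k => a k * b (m - k)%nat) m.

Lemma cmul_comm a b m : cmul a b m = cmul b a m.
Proof.
  unfold cmul. rewrite (gsum_rev (fun k => a k * b (m - k)%nat)).
  apply csum_ext; intros k Hk. replace (m - (m - k))%nat with k by lia. ring.
Qed.

Lemma cmul_assoc a b c m : cmul (cmul a b) c m = cmul a (cmul b c) m.
Proof.
  unfold cmul.
  rewrite (csum_ext _ (fun k => sum_n (fun i => a i * b (k - i)%nat * c (m - k)%nat) k)).
  2:{ intros k Hk. rewrite <- csum_mult_r. reflexivity. }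
  rewrite (gsum_tri (fun i k => a i * b (k - i)%nat * c (m - k)%nat)).
  apply csum_ext; intros i Hi. rewrite <- csum_mult_l. apply csum_ext; intros j Hj.
  replace (i + j - i)%nat with j by lia. replace (m - (i + j))%nat with (m - i - j)%nat by lia. ring.
Qed.

Lemma cmul_ext a a' b b' m : (forall k, (k <= m)%nat -> a k = a' k) -> (forall k, (k <= m)%nat -> b k = b' k) ->
  cmul a b m = cmul a' b' m.
Proof. intros Ha Hb. unfold cmul. apply csum_ext; intros k Hk. rewrite Ha, Hb; auto; lia. Qed.

Lemma cmul_plus_l a b c m : cmul (fun k => a k + b k) c m = cmul a c m + cmul b c m.
Proof. unfold cmul. rewrite <- csum_plus. apply csum_ext; intros; ring. Qed.
Lemma cmul_minus_l a b c m : cmul (fun k => a k - b k) c m = cmul a c m - cmul b c m.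
Proof. unfold cmul. rewrite <- csum_minus. apply csum_ext; intros; ring. Qed.
Lemma cmul_scal_l z a c m : cmul (fun k => z * a k) c m = z * cmul a c m.
Proof. unfold cmul. rewrite <- csum_mult_l. apply csum_ext; intros; ring. Qed.

Definition cone (m : nat) : C := match m with O => 1 | _ => 0 end.
Lemma cmul_one_l a m : cmul cone a m = a m.
Proof.
  unfold cmul. destruct m.
  - rewrite sum_O. simpl. ring.
  - rewrite (gsum_shift (fun k => cone k * a (S m - k)%nat)).
    rewrite (csum_zero (fun k => cone (S k) * a (S m - S k)%nat)).
    + change (1 * a (S m - 0)%nat + 0 = a (S m)). rewrite Nat.sub_0_r. ring.
    + intros; simpl; ring.
Qed.

Lemma cmr (a b g : C) : g <> 0 -> a * g = b * g -> a = b.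
Proof.
  intros Hg H. replace a with (a * g / g) by (field; auto). rewrite H. field; auto.
Qed.
Lemma cpl (x y z : C) : x + y = x + z -> y = z.
Proof. intros H. replace y with (x + y - x) by ring. rewrite H. ring. Qed.

Lemma cmul_cancel (a b g : nat -> C) : g 0%nat <> RtoC 0 -> (forall m, cmul a g m = cmul b g m) -> forall m, a m = b m.
Proof.
  intros Hg H. intros m. induction m as [m IH] using lt_wf_ind.
  specialize (H m). unfold cmul in H. destruct m.
  - rewrite !sum_O in H. simpl in H. apply (cmr _ _ (g 0%nat)); auto.
  - rewrite !csum_Sn, Nat.sub_diag in H.
    rewrite (csum_ext (fun k => a k * g (S m - k)%nat) (fun k => b k * g (S m - k)%nat)) in H.
    + apply cpl in H. apply (cmr _ _ (g 0%nat)); auto.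
    + intros k Hk. rewrite IH; auto. lia.
Qed.

Definition diag (u : nat -> nat -> C) m := sum_n (fun k => u k (m - k)%nat) m.

Lemma diag_mul (u v : nat -> nat -> C) m :
  diag (fun k n => sum_n (fun i => sum_n (fun p => u i p * v (k - i)%nat (n - p)%nat) n) k) m =
  cmul (diag u) (diag v) m.
Proof.
  unfold diag, cmul.
  rewrite (gsum_tri (fun i k => sum_n (fun p => u i p * v (k - i)%nat (m - k - p)%nat) (m - k))).
  rewrite (csum_ext (fun k => sum_n (fun i => u i (k - i)%nat) k * sum_n (fun j => v j (m - k - j)%nat) (m - k))
     (fun k => sum_n (fun i => u i (k - i)%nat * sum_n (fun j => v j (m - k - j)%nat) (m - k)) k)).
  2:{ intros; rewrite csum_mult_r; reflexivity. }
  rewrite (gsum_tri (fun i k => u i (k - i)%nat * sum_n (fun j => v j (m - k - j)%nat) (m - k))).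
  apply csum_ext; intros i Hi.
  rewrite (csum_ext (fun k => u i (i + k - i)%nat * sum_n (fun j => v j (m - (i + k) - j)%nat) (m - (i + k)))
    (fun p => sum_n (fun j => u i p * v j (m - i - p - j)%nat) (m - i - p))).
  2:{ intros p Hp. rewrite <- csum_mult_l. replace (i + p - i)%nat with p by lia.
      replace (m - (i + p))%nat with (m - i - p)%nat by lia. reflexivity. }
  rewrite <- tri_swap. apply csum_ext; intros j Hj.
  replace (m - (i + j))%nat with (m - i - j)%nat by lia.
  apply csum_ext; intros p Hp. f_equal. f_equal; lia.
Qed.

End PD.
Import PD.

Module PE.
Local Open Scope C_scope.

Lemma RtoC_sum (a : nat -> R) n : RtoC (sum_n a n) = sum_n (fun k => RtoC (a k)) n.
Proof.
  induction n. rewrite !sum_O. reflexivity.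
  rewrite (rsum_Sn a n), csum_Sn, <- IHn. apply RtoC_plus.
Qed.

Lemma binom_fact (x y : R) M :
  sum_n (fun j => (x ^ j / INR (fact j) * (y ^ (M - j) / INR (fact (M - j)))))%R M
  = ((x + y) ^ M / INR (fact M))%R.
Proof.
  rewrite binomial, <- sum_n_Reals. unfold Rdiv. rewrite Rmult_comm, <- rsum_mult_l.
  apply sum_n_ext_loc. intros j Hj. unfold Binomial.C.
  match goal with |- @eq _ ?a ?b => change (@eq R a b) end. field.
  repeat split; apply not_0_INR, fact_neq_0.
Qed.

Lemma term_eq (p a b a' b' : R) (Dz : C) : (a' * b' = p * a * b)%R ->
  RtoC p * (RtoC a * Dz * RtoC b) = RtoC a' * Dz * RtoC b'.
Proof.
  intros H. transitivity (RtoC (p * a * b) * Dz).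
  - rewrite !RtoC_mult. ring.
  - rewrite <- H, RtoC_mult. ring.
Qed.

Section F.
Variables lo hi : Rbar.
Let inU := in_open_int lo hi.
Let csm := Csmooth_on lo hi.
Definition csmF (F : fser) := forall k, Csmooth_on lo hi (F k).

Lemma csmF_add F G : csmF F -> csmF G -> csmF (fadd F G).
Proof. intros HF HG k. apply (csm_plus lo hi); auto. Qed.
Lemma csmF_sub F G : csmF F -> csmF G -> csmF (fsub F G).
Proof. intros HF HG k. apply (csm_minus lo hi); auto. Qed.
Lemma csmF_scal z F : csmF F -> csmF (fscal z F).
Proof. intros HF k. apply (csm_scal lo hi); auto. Qed.
Lemma csmF_mul F G : csmF F -> csmF G -> csmF (fmul F G).
Proof. intros HF HG k. apply (csm_sum lo hi). intros i. apply (csm_mult lo hi); auto. Qed.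
Lemma csmF_one : csmF fone.
Proof. intros k. unfold fone. apply (csm_const lo hi). Qed.
Lemma csmF_shift F s c : csmF F -> csmF (fshift F s c).
Proof.
  intros HF k. unfold fshift. apply (csm_sum lo hi). intros i.
  apply (csm_mult lo hi). apply (csm_scal lo hi). apply (csm_CDn lo hi). auto. apply (csm_const lo hi).
Qed.

Lemma fshift_D F s c m x :
  fshift F s c m x = diag (fun k n => RtoC (s ^ k * c ^ n) * ctay (F k) n x) m.
Proof.
  unfold fshift, diag. apply csum_ext; intros k Hk. rewrite <- ctay_eq.
  unfold Rdiv. rewrite !RtoC_mult. ring.
Qed.

Lemma fshift_loc F G s c m x : (forall t, inU t -> forall k, F k t = G k t) -> inU x ->
  fshift F s c m x = fshift G s c m x.
Proof.
  intros H Hx. unfold fshift. apply csum_ext; intros k Hk. f_equal. f_equal.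
  apply (CDn_ext_U lo hi); auto.
Qed.

Lemma fshift_add F G s c m x : csmF F -> csmF G -> inU x ->
  fshift (fadd F G) s c m x = fshift F s c m x + fshift G s c m x.
Proof.
  intros HF HG Hx. unfold fshift, fadd. rewrite <- csum_plus. apply csum_ext; intros k Hk.
  rewrite (CDn_plus lo hi); auto. ring.
Qed.

Lemma fshift_sub F G s c m x : csmF F -> csmF G -> inU x ->
  fshift (fsub F G) s c m x = fshift F s c m x - fshift G s c m x.
Proof.
  intros HF HG Hx. unfold fshift, fsub. rewrite <- csum_minus. apply csum_ext; intros k Hk.
  rewrite (CDn_minus lo hi); auto. ring.
Qed.

Lemma fshift_scal z F s c m x : csmF F -> inU x ->
  fshift (fscal z F) s c m x = z * fshift F s c m x.
Proof.
  intros HF Hx. unfold fshift, fscal. rewrite <- csum_mult_l. apply csum_ext; intros k Hk.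
  rewrite (CDn_scal lo hi); auto. ring.
Qed.

Lemma fshift_one s c m x : fshift fone s c m x = fone m x.
Proof.
  unfold fshift. destruct m.
  - rewrite sum_O. change (0 - 0)%nat with 0%nat. rewrite CDn_0. unfold fone. simpl.
    apply C_ext; unfold Cmult, RtoC, Re, Im; simpl; field.
  - rewrite csum_Sn. rewrite Nat.sub_diag. rewrite CDn_0.
    rewrite csum_zero. unfold fone. simpl. ring.
    intros k Hk. replace (S m - k)%nat with (S (m - k)) by lia. unfold fone. cbv beta.
    rewrite CDn_const. ring.
Qed.

Lemma ctay_sum (H : nat -> R -> C) N n x : (forall i, csm (H i)) -> inU x ->
  ctay (fun t => sum_n (fun i => H i t) N) n x = sum_n (fun i => ctay (H i) n x) N.
Proof.
  intros HH Hx. rewrite <- ctay_eq. rewrite (CDn_sum lo hi); auto. rewrite <- csum_mult_r.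
  apply csum_ext; intros. apply ctay_eq.
Qed.

Lemma diag_ext u v m : (forall k, (k <= m)%nat -> u k (m - k)%nat = v k (m - k)%nat) -> diag u m = diag v m.
Proof. intros H. unfold diag. apply csum_ext. auto. Qed.

Lemma fshift_mul F G s c m x : csmF F -> csmF G -> inU x ->
  fshift (fmul F G) s c m x = fmul (fshift F s c) (fshift G s c) m x.
Proof.
  intros HF HG Hx.
  set (u := fun k n => RtoC (s ^ k * c ^ n) * ctay (F k) n x).
  set (v := fun k n => RtoC (s ^ k * c ^ n) * ctay (G k) n x).
  transitivity (cmul (diag u) (diag v) m).
  - rewrite fshift_D. rewrite <- diag_mul. apply diag_ext. intros k Hk.
    unfold fmul. rewrite ctay_sum; auto.
    2:{ intros i; apply (csm_mult lo hi); auto. }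
    rewrite <- csum_mult_l. apply csum_ext; intros i Hi.
    rewrite (ctay_mult lo hi); auto. rewrite <- csum_mult_l. apply csum_ext; intros p Hp.
    unfold u, v.
    replace (s ^ k)%R with (s ^ i * s ^ (k - i))%R by (rewrite <- pow_add; f_equal; lia).
    replace (c ^ (m - k))%R with (c ^ p * c ^ (m - k - p))%R by (rewrite <- pow_add; f_equal; lia).
    rewrite !RtoC_mult. ring.
  - unfold fmul. unfold cmul. apply csum_ext; intros a Ha.
    rewrite !fshift_D. reflexivity.
Qed.

Lemma fshift_comp1 F s1 c1 c2 m x : csmF F -> inU x ->
  fshift (fshift F s1 c1) 1 c2 m x = fshift F s1 (c1 + c2) m x.
Proof.
  intros HF Hx. unfold fshift at 1.
  rewrite (csum_ext _ (fun k => sum_n (fun i =>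
      RtoC (s1 ^ i) * CDerive_n (F i) (m - k + (k - i)) x *
      RtoC (c1 ^ (k - i) / INR (fact (k - i)) * (c2 ^ (m - k) / INR (fact (m - k))))) k)).
  2:{ intros k Hk. unfold fshift.
      rewrite (CDn_ext_U lo hi _ (fun t => sum_n (fun i => (RtoC (s1 ^ i) * RtoC (c1 ^ (k - i) / INR (fact (k - i)))) *
                CDerive_n (F i) (k - i) t) k)); auto.
      2:{ intros t _. apply csum_ext; intros; ring. }
      rewrite (CDn_sum lo hi); auto.
      2:{ intros i. apply (csm_scal lo hi). apply (csm_CDn lo hi). auto. }
      rewrite pow1, Cmult_1_l, <- csum_mult_r. apply csum_ext; intros i Hi.
      rewrite (CDn_scal lo hi); auto. 2:{ apply (csm_CDn lo hi); auto. }
      rewrite CDn_comp. rewrite !RtoC_mult. ring. }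
  rewrite (gsum_tri (fun i k => RtoC (s1 ^ i) * CDerive_n (F i) (m - k + (k - i)) x *
      RtoC (c1 ^ (k - i) / INR (fact (k - i)) * (c2 ^ (m - k) / INR (fact (m - k)))))).
  unfold fshift. apply csum_ext; intros i Hi.
  rewrite (csum_ext _ (fun j => (RtoC (s1 ^ i) * CDerive_n (F i) (m - i) x) *
       RtoC (c1 ^ j / INR (fact j) * (c2 ^ (m - i - j) / INR (fact (m - i - j)))))).
  2:{ intros j Hj. replace (m - (i + j) + (i + j - i))%nat with (m - i)%nat by lia.
      replace (i + j - i)%nat with j by lia. replace (m - (i + j))%nat with (m - i - j)%nat by lia.
      reflexivity. }
  rewrite csum_mult_l, <- RtoC_sum, binom_fact. reflexivity.
Qed.

End F.

Definition refl (F : fser) : fser := fun m x => RtoC ((-1) ^ m) * F m x.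

Lemma refl_mul F G m x : refl (fmul F G) m x = fmul (refl F) (refl G) m x.
Proof.
  unfold refl, fmul. rewrite <- csum_mult_l. apply csum_ext; intros k Hk.
  replace ((-1) ^ m)%R with ((-1) ^ k * (-1) ^ (m - k))%R by (rewrite <- pow_add; f_equal; lia).
  rewrite RtoC_mult. ring.
Qed.

Lemma refl_shift F s c m x : refl (fshift F s c) m x = fshift F (- s) (- c) m x.
Proof.
  unfold refl, fshift. rewrite <- csum_mult_l. apply csum_ext; intros k Hk.
  apply term_eq. unfold Rdiv.
  replace ((-1) ^ m)%R with ((-1) ^ k * (-1) ^ (m - k))%R by (rewrite <- pow_add; f_equal; lia).
  replace (- s)%R with (-1 * s)%R by ring. replace (- c)%R with (-1 * c)%R by ring.
  rewrite !Rpow_mult_distr. ring.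
Qed.

End PE.
Import PE.

Module PM.
Local Open Scope C_scope.

Lemma fmul_cmul F G m x : fmul F G m x = cmul (fun k => F k x) (fun k => G k x) m.
Proof. reflexivity. Qed.

Lemma fshift_0 F s c x : fshift F s c 0%nat x = F 0%nat x.
Proof.
  unfold fshift. rewrite sum_O. change (0 - 0)%nat with 0%nat. rewrite CDn_0. simpl.
  apply C_ext; unfold Cmult, RtoC, Re, Im; simpl; field.
Qed.

Lemma shift_eq F s c c' k x : c = c' -> fshift F s c k x = fshift F s c' k x.
Proof. intros ->; reflexivity. Qed.
Lemma shift_eq2 F s s' c c' k x : s = s' -> c = c' -> fshift F s c k x = fshift F s' c' k x.
Proof. intros -> ->; reflexivity. Qed.

Lemma core (lo hi : Rbar) (A Vl : fser) (l : C) (x sg : R) :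
  csmF lo hi A -> csmF lo hi Vl -> in_open_int lo hi x -> (sg = 1 \/ sg = -1)%R ->
  (forall m y, in_open_int lo hi y ->
     fmul A (fmul (fadd Vl (fshift Vl (-1) (-1))) (fadd Vl (fshift Vl (-1) 1))) m y
       = fscal l (fsub (fmul Vl Vl) fone) m y) ->
  Vl 0%nat x + Vl 0%nat x <> 0 ->
  let E : fser :=
      fsub (fscal l (fshift Vl 1 (- sg / 2)))
           (fmul (fshift A 1 (- sg / 2))
                 (fadd (fshift Vl 1 (- sg / 2)) (fshift Vl (-1) (- 3 * sg / 2)))) in
  forall m, Nat.odd m = true -> E m x = 0.
Proof.
  intros HA HV Hx Hsg Hrel H0 E.
  set (c := (- sg / 2)%R) in *.
  set (Vs := fshift Vl 1 c).
  set (U := fshift Vl (-1) (- c)).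
  set (W := fshift Vl (-1) (- 3 * sg / 2)).
  set (As := fshift A 1 c).
  set (P := fadd Vl (fshift Vl (-1) (-1))).
  set (Q := fadd Vl (fshift Vl (-1) 1)).
  assert (HP : csmF lo hi P) by (apply csmF_add; auto; apply csmF_shift; auto).
  assert (HQ : csmF lo hi Q) by (apply csmF_add; auto; apply csmF_shift; auto).
  assert (S1 : forall m, fmul As (fmul (fadd Vs W) (fadd Vs U)) m x = fscal l (fsub (fmul Vs Vs) fone) m x).
  { intros m.
    assert (L : fshift (fmul A (fmul P Q)) 1 c m x = fshift (fscal l (fsub (fmul Vl Vl) fone)) 1 c m x).
    { apply (fshift_loc lo hi); auto. }
    rewrite (fshift_scal lo hi) in L; auto.
    2:{ apply csmF_sub. apply csmF_mul; auto. apply csmF_one. }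
    rewrite (fshift_sub lo hi) in L; auto.
    2:{ apply csmF_mul; auto. }
    2:{ apply csmF_one. }
    rewrite (fshift_mul lo hi Vl Vl) in L; auto.
    rewrite fshift_one in L.
    rewrite (fshift_mul lo hi A) in L; auto.
    2:{ apply csmF_mul; auto. }
    unfold fscal, fsub. transitivity (fmul (fshift A 1 c) (fshift (fmul P Q) 1 c) m x); [| exact L].
    rewrite !fmul_cmul. apply cmul_ext; auto.
    intros k Hk. rewrite (fshift_mul lo hi); auto. rewrite !fmul_cmul.
    assert (EP : forall j, fshift P 1 c j x = Vs j x + fshift Vl (-1) (c - 1) j x).
    { intros j. unfold P. rewrite (fshift_add lo hi); auto. 2:{ apply csmF_shift; auto. }
      rewrite (fshift_comp1 lo hi); auto. f_equal. apply shift_eq. ring. }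
    assert (EQ : forall j, fshift Q 1 c j x = Vs j x + fshift Vl (-1) (c + 1) j x).
    { intros j. unfold Q. rewrite (fshift_add lo hi); auto. 2:{ apply csmF_shift; auto. }
      rewrite (fshift_comp1 lo hi); auto. f_equal. apply shift_eq. ring. }
    destruct Hsg as [Hs | Hs].
    - apply cmul_ext; intros j Hj; unfold fadd.
      + rewrite EP. f_equal. unfold W. apply shift_eq. unfold c. rewrite Hs. field.
      + rewrite EQ. f_equal. unfold U. apply shift_eq. unfold c. rewrite Hs. field.
    - rewrite cmul_comm. apply cmul_ext; intros j Hj; unfold fadd.
      + rewrite EP. f_equal. unfold U. apply shift_eq. unfold c. rewrite Hs. field.
      + rewrite EQ. f_equal. unfold W. apply shift_eq. unfold c. rewrite Hs. field. }
  set (G := fadd Vs U).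
  assert (S2 : forall m, fmul E G m x = l * (fmul Vs U m x + fone m x)).
  { intros m. rewrite fmul_cmul. unfold E, fsub, fscal.
    rewrite cmul_minus_l, cmul_scal_l.
    transitivity (l * cmul (fun k => Vs k x) (fun k => G k x) m -
                  cmul (fun k => As k x) (fun k => fmul (fadd Vs W) (fadd Vs U) k x) m).
    { f_equal. transitivity (cmul (fun k => As k x) (cmul (fun k => fadd Vs W k x) (fun k => G k x)) m).
      - rewrite <- cmul_assoc. apply cmul_ext; auto.
      - apply cmul_ext; auto. }
    rewrite <- (fmul_cmul As (fmul (fadd Vs W) (fadd Vs U))). rewrite S1. unfold fscal, fsub.
    rewrite cmul_comm. unfold G, fadd. rewrite cmul_plus_l.
    rewrite (cmul_comm (fun k => U k x)).
    change (cmul (fun k => Vs k x) (fun k => Vs k x) m) with (fmul Vs Vs m x).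
    change (cmul (fun k => Vs k x) (fun k => U k x) m) with (fmul Vs U m x).
    ring. }
  assert (S3 : forall m, fmul (refl E) G m x = fmul E G m x).
  { intros m.
    transitivity (fmul (refl E) (refl G) m x).
    { rewrite !fmul_cmul. apply cmul_ext; auto. intros k Hk. unfold G, refl, fadd.
      rewrite Cmult_plus_distr_l.
      change (RtoC ((-1) ^ k) * Vs k x) with (refl Vs k x).
      change (RtoC ((-1) ^ k) * U k x) with (refl U k x).
      unfold Vs, U. rewrite !refl_shift. rewrite Cplus_comm. f_equal; apply shift_eq2; ring. }
    rewrite <- refl_mul. unfold refl at 1. rewrite S2.
    assert (Ho : RtoC ((-1) ^ m) * fone m x = fone m x).
    { destruct m; unfold fone; simpl; ring. }
    assert (HVU : RtoC ((-1) ^ m) * fmul Vs U m x = fmul Vs U m x).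
    { change (RtoC ((-1) ^ m) * fmul Vs U m x) with (refl (fmul Vs U) m x).
      rewrite refl_mul. rewrite !fmul_cmul. rewrite cmul_comm. apply cmul_ext; intros k Hk.
      - unfold U, Vs. rewrite refl_shift. apply shift_eq2; ring.
      - unfold U, Vs. rewrite refl_shift. apply shift_eq2; ring. }
    rewrite <- Ho, <- HVU at 2. ring. }
  assert (S4 : forall m, refl E m x = E m x).
  { apply (cmul_cancel (fun k => refl E k x) (fun k => E k x) (fun k => G k x)).
    - unfold G, fadd, Vs, U. rewrite !fshift_0. exact H0.
    - intros m. rewrite <- !fmul_cmul. apply S3. }
  intros m Hm. specialize (S4 m). unfold refl in S4.
  apply Nat.odd_spec in Hm. destruct Hm as [j ->].
  rewrite Nat.add_1_r in S4 |- *. rewrite pow_1_odd in S4.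
  set (e := E (S (2 * j)) x) in *.
  assert (Hm1 : RtoC (-1) = Copp (RtoC 1)) by (apply C_ext; unfold RtoC, Copp, Re, Im; simpl; lra).
  rewrite Hm1 in S4.
  assert (H2 : RtoC 2 * e = 0).
  { replace (RtoC 2 * e) with (e - (- RtoC 1) * e) by (apply C_ext; unfold RtoC, Copp, Cminus, Cplus, Cmult, Re, Im; simpl; ring).
    rewrite S4. ring. }
  assert (H2' : RtoC 2 <> 0). { intros H. apply RtoC_inj in H. lra. }
  replace e with (/ RtoC 2 * (RtoC 2 * e)) by (field; auto). rewrite H2. ring.
Qed.

End PM.
Import PM.

Theorem proposition1
  (rc : R) (wc : C -> C) (lo hi : Rbar)
  (a : nat -> R -> R) (V : nat -> C -> R -> C) :
  (0 < rc)%R ->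
  is_wc rc wc ->
  (forall x, a 0%nat x = rc) ->
  (forall k, (1 <= k)%nat -> smooth_on lo hi (a k)) ->
  (forall k x, in_open_int lo hi x -> forall l, ext_dom rc l -> holo_at (fun z => V k z x) l) ->
  (forall k l, ext_dom rc l -> Csmooth_on lo hi (V k l)) ->
  (forall l x, ext_dom rc l -> V 0%nat l x = l / wc l) ->
  (forall l, ext_dom rc l ->
     let A : fser := fun k x => RtoC (a k x) in
     let Vl : fser := fun k x => V k l x in
     forall m x, in_open_int lo hi x ->
       fmul A (fmul (fadd Vl (fshift Vl (-1) (-1)))
                    (fadd Vl (fshift Vl (-1) 1))) m x
       = fscal l (fsub (fmul Vl Vl) fone) m x) ->
  forall l, ext_dom rc l ->
    let A : fser := fun k x => RtoC (a k x) in
    let Vl : fser := fun k x => V k l x in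
    forall sg : R, (sg = 1 \/ sg = -1)%R ->
    let E : fser :=
      fsub (fscal l (fshift Vl 1 (- sg / 2)))
           (fmul (fshift A 1 (- sg / 2))
                 (fadd (fshift Vl 1 (- sg / 2)) (fshift Vl (-1) (- 3 * sg / 2)))) in
    forall m x, in_open_int lo hi x -> Nat.odd m = true -> E m x = 0.
Proof.
  intros Hrc Hwc Ha0 Ha Hhol HV HV0 Hrel l Hl A Vl sg Hsg E m x Hx Hodd.
  assert (HA : csmF lo hi A).
  { intros k. split.
    - destruct k.
      + apply (sm_ext lo hi (fun _ => rc)). intros t _. unfold A. rewrite Ha0. reflexivity.
        apply sm_const.
      + apply (sm_ext lo hi (a (S k))). intros t _. reflexivity. apply Ha. lia.
    - apply (sm_ext lo hi (fun _ => 0%R)). intros t _. reflexivity. apply sm_const. }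
  assert (HVl : csmF lo hi Vl).
  { intros k. apply HV. exact Hl. }
  assert (Hrel' := Hrel l Hl). cbv zeta in Hrel'.
  assert (Hl0 : l <> 0).
  { intros H. unfold ext_dom in Hl. rewrite H, Cmod_0 in Hl. lra. }
  assert (Hw0 : wc l <> 0).
  { intros H. destruct Hwc as [Hw _]. specialize (Hw l Hl). rewrite H, Cmult_0_l in Hw.
    assert (Hz : l - RtoC (4 * rc) = 0).
    { apply (cmr _ _ l); auto. rewrite Cmult_0_l. transitivity (l * (l - RtoC (4 * rc))). ring. symmetry; exact Hw. }
    assert (l = RtoC (4 * rc)).
    { replace l with (l - RtoC (4 * rc) + RtoC (4 * rc)) by ring. rewrite Hz. ring. }
    unfold ext_dom in Hl. rewrite H0, Cmod_R, Rabs_right in Hl; lra. }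
  assert (H0 : Vl 0%nat x + Vl 0%nat x <> 0).
  { unfold Vl. rewrite HV0; auto. intros H.
    assert (H2 : RtoC 2 <> 0) by (intros H2; apply RtoC_inj in H2; lra).
    apply Hl0. replace l with ((l / wc l + l / wc l) * wc l / 2) by (field; try split; auto).
    rewrite H. field. }
  exact (core lo hi A Vl l x sg HA HVl Hx Hsg Hrel' H0 m Hodd).
Qed.
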